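(* In generalized non-signalling theory (box world), let $X$ and $Y$ be systems (each consisting of one or more boxes), let $M_X$ be a maximally informative measurement on $X$ and $M_Y$ a maximally informative measurement on $Y$. Then the product measurement $M_X\otimes M_Y$ is a maximally informative measurement on the composite system $XY$.
   Context: Box world (GNST): a box has a finite set of inputs and outputs. A system of $n$ boxes has states given by all collections $p(\mathbf{a}|\mathbf{x})\ge0$ (output tuple $\mathbf{a}$, input tuple $\mathbf{x}$) that are normalized ($\sum_{\mathbf{a}}p(\mathbf{a}|\mathbf{x})=1$ for all $\mathbf{x}$) and no-signalling (for each $i$, $\sum_{a_i}p(\mathbf{a}|\mathbf{x})$ is independent of $x_i$). An effect is any linear map $\mu$ from states to $[0,1]$; a vector $\mathbf{R}$ indexed by $(\mathbf{a},\mathbf{x})$ represents $\mu$ if $\mu(\mathbf{p})=\sum p(\mathbf{a}|\mathbf{x})R(\mathbf{a}|\mathbf{x})$ for all states. A measurement is a finite set $\{(r,\mu_r)\}$ of effects summing to the constant map $1$. If $M_X$ has effects $\mu_r$ represented by $\mathbf{R}_r$ and $M_Y$ has effects $\nu_s$ represented by $\mathbf{S}_s$, then $M_X\otimes M_Y$ is the measurement on $XY$ with outcomes $(r,s)$ and effects represented by the tensor products $\mathbf{R}_r\otimes\mathbf{S}_s$ (performing $M_X$ on $X$ and $M_Y$ on $Y$ independently). A measurement $N=\{(s,\nu_s)\}$ refines $M=\{(r,\mu_r)\}$ if the outcomes of $N$ can be partitioned into sets $P_r$ with $\mu_r=\sum_{s\in P_r}\nu_s$; the refinement is trivial if $\nu_s\propto\mu_r$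 whenever $s\in P_r$. A measurement is maximally informative if it has no non-trivial refinement. *)

(* Defs.v *)
From HB Require Import structures.
From mathcomp Require Import all_boot all_order all_algebra.
From mathcomp Require Import reals.
Set Implicit Arguments. Unset Strict Implicit. Unset Printing Implicit Defensive.
Import Order.TTheory GRing.Theory Num.Theory.
Local Open Scope ring_scope.

Record system := Sys {
  sBox : finType;
  sIn  : sBox -> finType;
  sOut : sBox -> finType }.

Definition valid_system (S : system) : Prop :=
  (0 < #|sBox S|)%N /\
  (forall b, 0 < #|@sIn S b|)%N /\ (forall b, 0 < #|@sOut S b|)%N.

Definition inT (S : system) := {dffun forall b : sBox S, @sIn S b}.
Definition outT (S : system) := {dffun forall b : sBox S, @sOut S b}.

(* index (a, x) of the vectors p(a|x), R(a|x) *)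
Definition idx (S : system) := (outT S * inT S)%type.

Definition vec (R : realType) (S : system) := idx S -> R.

Definition is_state (R : realType) (S : system) (p : vec R S) : Prop :=
  (forall ax, 0 <= p ax) /\
  (forall x : inT S, \sum_(a : outT S) p (a, x) = 1) /\
  (forall (i : sBox S) (x x' : inT S) (a : outT S),
     (forall j, j != i -> x j = x' j) ->
     \sum_(a' : outT S | [forall j, (j != i) ==> (a' j == a j)]) p (a', x)
     = \sum_(a' : outT S | [forall j, (j != i) ==> (a' j == a j)]) p (a', x')).

Definition pair (R : realType) (S : system) (p E : vec R S) : R :=
  \sum_(ax : idx S) p ax * E ax.

Definition is_effect (R : realType) (S : system) (E : vec R S) : Prop :=
  forall p, is_state p -> 0 <= pair p E <= 1.

Definition is_measurement (R : realType) (S : system) (T : finType)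
    (E : T -> vec R S) : Prop :=
  (forall r, is_effect (E r)) /\
  (forall p, is_state p -> \sum_(r : T) pair p (E r) = 1).

(* N (outcomes s : Ts) refines M (outcomes r : Tr): a partition of the
   outcomes of N into blocks P_r = f^-1(r) with mu_r = sum_{s in P_r} nu_s,
   equality of effects being equality as maps on states *)
Definition refines (R : realType) (S : system) (Tr Ts : finType)
    (M : Tr -> vec R S) (N : Ts -> vec R S) (f : Ts -> Tr) : Prop :=
  forall r p, is_state p ->
    pair p (M r) = \sum_(s : Ts | f s == r) pair p (N s).

Definition trivial_refinement (R : realType) (S : system) (Tr Ts : finType)
    (M : Tr -> vec R S) (N : Ts -> vec R S) (f : Ts -> Tr) : Prop :=
  forall s, exists c : R, forall p, is_state p ->
    pair p (N s) = c * pair p (M (f s)).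

Definition maximally_informative (R : realType) (S : system) (Tr : finType)
    (M : Tr -> vec R S) : Prop :=
  is_measurement M /\
  forall (Ts : finType) (N : Ts -> vec R S) (f : Ts -> Tr),
    is_measurement N -> refines M N f -> trivial_refinement M N f.

Definition compose (X Y : system) : system :=
  @Sys (sBox X + sBox Y)%type
    (fun b => match b with inl b => @sIn X b | inr b => @sIn Y b end)
    (fun b => match b with inl b => @sOut X b | inr b => @sOut Y b end).

Definition resXo (X Y : system) (a : outT (compose X Y)) : outT X :=
  [ffun b => a (inl b)].
Definition resYo (X Y : system) (a : outT (compose X Y)) : outT Y :=
  [ffun b => a (inr b)].
Definition resXi (X Y : system) (x : inT (compose X Y)) : inT X :=
  [ffun b => x (inl b)].
Definition resYi (X Y : system) (x : inT (compose X Y)) : inT Y :=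
  [ffun b => x (inr b)].

Definition tensor (R : realType) (X Y : system) (EX : vec R X) (EY : vec R Y)
  : vec R (compose X Y) :=
  fun ax => EX (resXo ax.1, resXi ax.2) * EY (resYo ax.1, resYi ax.2).

Definition prod_meas (R : realType) (X Y : system) (Tr Ts : finType)
    (MX : Tr -> vec R X) (MY : Ts -> vec R Y) : (Tr * Ts)%type -> vec R (compose X Y) :=
  fun rs => tensor (MX rs.1) (MY rs.2).

(* Main.v *)
Require Import Defs.
From HB Require Import structures.
From mathcomp Require Import all_boot all_order all_algebra.
From mathcomp Require Import reals.
From mathcomp Require Import lra ring zify.
From Stdlib Require Import Classical FunctionalExtensionality.
Set Implicit Arguments. Unset Strict Implicit. Unset Printing Implicit Defensive.
Import Order.TTheory GRing.Theory Num.Theory.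
Local Open Scope ring_scope.

Definition joino (X Y : system) (aX : outT X) (aY : outT Y) : outT (compose X Y) :=
  [ffun b => match b as b0 return @sOut (compose X Y) b0 with inl b => aX b | inr b => aY b end].
Definition joini (X Y : system) (aX : inT X) (aY : inT Y) : inT (compose X Y) :=
  [ffun b => match b as b0 return @sIn (compose X Y) b0 with inl b => aX b | inr b => aY b end].

Lemma joinoK X Y (a : outT (compose X Y)) : joino (resXo a) (resYo a) = a.
Proof. by apply/ffunP => -[b|b]; rewrite !ffunE. Qed.
Lemma joiniK X Y (a : inT (compose X Y)) : joini (resXi a) (resYi a) = a.
Proof. by apply/ffunP => -[b|b]; rewrite !ffunE. Qed.
Lemma resXo_join X Y aX aY : resXo (@joino X Y aX aY) = aX.
Proof. by apply/ffunP => b; rewrite !ffunE. Qed.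
Lemma resYo_join X Y aX aY : resYo (@joino X Y aX aY) = aY.
Proof. by apply/ffunP => b; rewrite !ffunE. Qed.
Lemma resXi_join X Y aX aY : resXi (@joini X Y aX aY) = aX.
Proof. by apply/ffunP => b; rewrite !ffunE. Qed.
Lemma resYi_join X Y aX aY : resYi (@joini X Y aX aY) = aY.
Proof. by apply/ffunP => b; rewrite !ffunE. Qed.

Lemma sum_outZ (R : realType) X Y (F : outT (compose X Y) -> R) :
  \sum_(a : outT (compose X Y)) F a = \sum_(aX : outT X) \sum_(aY : outT Y) F (joino aX aY).
Proof.
rewrite pair_big /=.
rewrite (reindex (fun p : outT X * outT Y => joino p.1 p.2)) //=.
exists (fun a => (resXo a, resYo a)) => [[u v] _|a _] /=.
  by rewrite resXo_join resYo_join.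
by rewrite joinoK.
Qed.


Definition NSi (R : realType) (S : system) (w : vec R S) (i : sBox S) : Prop :=
  forall (x x' : inT S) (a : outT S),
     (forall j, j != i -> x j = x' j) ->
     \sum_(a' : outT S | [forall j, (j != i) ==> (a' j == a j)]) w (a', x)
     = \sum_(a' : outT S | [forall j, (j != i) ==> (a' j == a j)]) w (a', x').

Lemma marg_step (R : realType) (S : system) (w : vec R S) (D : pred (sBox S)) i
   (x x1 : inT S) (a : outT S) : D i -> NSi w i -> (forall j, j != i -> x j = x1 j) ->
  \sum_(a' : outT S | [forall j, ~~ D j ==> (a' j == a j)]) w (a', x) =
  \sum_(a' : outT S | [forall j, ~~ D j ==> (a' j == a j)]) w (a', x1).
Proof.
move=> Di NS Hx.
set A := fun a' : outT S => [forall j, ~~ D j ==> (a' j == a j)].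
pose g (a' : outT S) : outT S := [ffun j => if j == i then a j else a' j].
have key y : \sum_(a' | A a') w (a', y) =
   \sum_(a'' | A a'') \sum_(a' | A a' && (g a' == a'')) w (a', y).
  apply: partition_big => a' Ha'; apply/forallP => j; apply/implyP => Dj.
  rewrite ffunE; case: ifP => _ //; exact: (implyP (forallP Ha' j)).
rewrite !key; apply: eq_bigr => a'' Ha''.
case Hi: (a'' i == a i).
  have E : (fun a' : outT S => A a' && (g a' == a'')) =1
     (fun a' : outT S => [forall j, (j != i) ==> (a' j == a'' j)]); last first.
    by rewrite !(eq_bigl _ _ E); exact: (NS x x1 a'' Hx).
  move=> a' /=; apply/andP/forallP => [[Ha' /eqP <-] j|H]; first apply/implyP => ne.
    by rewrite ffunE (negbTE ne).
  split.
    apply/forallP => j; apply/implyP => Dj.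
    have ne : j != i by apply: contraNneq Dj => ->.
    rewrite (eqP (implyP (H j) ne)); exact: (implyP (forallP Ha'' j) Dj).
  apply/eqP/ffunP => j; rewrite ffunE.
  case: (eqVneq j i) => [->|ne]; first by rewrite (eqP Hi).
  exact/eqP/(implyP (H j) ne).
have P0 : (fun a' : outT S => A a' && (g a' == a'')) =1 xpred0.
  move=> a' /=; apply/andP => -[_ /eqP Hg].
  by move: Hi; rewrite -Hg ffunE eqxx eqxx.
by rewrite !big_pred0.
Qed.

Lemma marg (R : realType) (S : system) (w : vec R S) (D : pred (sBox S))
   (x x' : inT S) (a : outT S) : (forall i, D i -> NSi w i) ->
  (forall j, ~~ D j -> x j = x' j) ->
  \sum_(a' : outT S | [forall j, ~~ D j ==> (a' j == a j)]) w (a', x) =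
  \sum_(a' : outT S | [forall j, ~~ D j ==> (a' j == a j)]) w (a', x').
Proof.
move=> NS; move: {2}#|[pred j | x j != x' j]| (leqnn #|[pred j | x j != x' j]|) => n.
elim: n x => [|n IH] x Hn Hx.
  have -> : x = x' => //.
  apply/ffunP => j; apply/eqP; apply: contraTT Hn => ne; rewrite -ltnNge.
  by apply/card_gt0P; exists j.
case: (pickP [pred j | x j != x' j]) => [i /= Hi|H0].
  pose x1 : inT S := [ffun j => if j == i then x' j else x j].
  have Di : D i by apply: contraNT Hi => /Hx ->.
  have hx1 : forall j, j != i -> x j = x1 j.
    by move=> j ne; rewrite ffunE (negbTE ne).
  rewrite (@marg_step R S w D i x x1 a Di (NS i Di) hx1).
  apply: IH.
    rewrite (cardD1 i) inE /= Hi add1n ltnS in Hn.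
    apply: leq_trans Hn; apply: subset_leq_card; apply/subsetP => j.
    rewrite !inE ffunE; case: (eqVneq j i) => [->|ne]; first by rewrite eqxx.
    by [].
  move=> j Dj; rewrite ffunE; case: (eqVneq j i) => [->|_] //; exact: Hx.
have -> : x = x' => //.
by apply/ffunP => j; apply/eqP; move: (H0 j) => /= /negbFE.
Qed.


Lemma out_inhab S : valid_system S -> exists a : outT S, True.
Proof.
case=> _ [_ HO].
have ex b : exists x : @sOut S b, predT x by have /card_gt0P[x _] := HO b; exists x.
by exists [ffun b => xchoose (ex b)].
Qed.

Lemma in_inhab S : valid_system S -> exists a : inT S, True.
Proof.
case=> _ [HI _].
have ex b : exists x : @sIn S b, predT x by have /card_gt0P[x _] := HI b; exists x.
by exists [ffun b => xchoose (ex b)].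
Qed.

Definition unif (R : realType) (S : system) : vec R S :=
  fun _ => (#|{: outT S}|%:R)^-1.

Lemma card_out_gt0 S : valid_system S -> (0 < #|{: outT S}|)%N.
Proof. by move=> /out_inhab [a _]; apply/card_gt0P; exists a. Qed.

Lemma unif_state (R : realType) S : valid_system S -> is_state (@unif R S).
Proof.
move=> V; have N0 := card_out_gt0 V.
split; first by move=> ax; rewrite /unif invr_ge0 ler0n.
split=> //.
move=> x; rewrite /unif sumr_const.
have -> : #|(xpredT : pred (outT S))| = #|{: outT S}| by apply: eq_card.
by rewrite -(mulr_natr ((#|{: outT S}|%:R : R)^-1)) mulVf // pnatr_eq0 -lt0n.
Qed.

Definition NSlin (R : realType) (S : system) (w : vec R S) : Prop :=
  (forall i, NSi w i) /\ (forall x x', \sum_(a : outT S) w (a, x) = \sum_(a : outT S) w (a, x')).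

Lemma span_states (R : realType) S (w : vec R S) : valid_system S -> NSlin w ->
  exists c1 c2 (s1 s2 : vec R S), [/\ is_state s1, is_state s2 &
    forall ax, w ax = c1 * s1 ax + c2 * s2 ax].
Proof.
move=> V [NS Nm].
have N0 := card_out_gt0 V; have [x0 _] := in_inhab V.
set N : R := #|{: outT S}|%:R.
have Npos : 1 <= N by rewrite /N ler1n.
set K : R := 1 + \sum_(ax : idx S) `|w ax|.
set lam : R := \sum_(a : outT S) w (a, x0).
have Kge ax : `|w ax| + 1 <= K.
  rewrite /K addrC lerD2l (bigD1 ax) //= lerDl; exact: sumr_ge0.
have lamge : - K < lam.
  have : - (\sum_(ax : idx S) `|w ax|) <= lam.
    rewrite lerNl; apply: le_trans (ler_norm _) _; rewrite normrN.
    apply: le_trans (ler_norm_sum _ _ _) _.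
    have -> : \sum_(ax : idx S) `|w ax| = \sum_(x : inT S) \sum_(a : outT S) `|w (a, x)|.
      by rewrite exchange_big pair_bigA; apply: eq_bigr => -[].
    rewrite (bigD1 x0) //= lerDl; apply: sumr_ge0 => x _; apply: sumr_ge0 => a _; exact: normr_ge0.
  by move=> H; rewrite /K; lra.
have [a0 _] := out_inhab V.
have K1 : 1 <= K by have := Kge (a0, x0); have := normr_ge0 (w (a0, x0)); move=> h1 h2; lra.
have Dpos : 0 < lam + K * N by nra.
have wK ax : 0 <= w ax + K.
  have /andP[h1 h2] : - `|w ax| <= w ax <= `|w ax| by rewrite -ler_norml.
  have := Kge ax; move=> h3; lra.
have DN : lam + K * N != 0 by rewrite gt_eqF.
have NN : N != 0 by apply/eqP => h; move: Npos; rewrite h; lra.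
exists (lam + K * N), (- (K * N)), (fun ax => (w ax + K) / (lam + K * N)), (@unif R S).
split; last first.
- by move=> ax; rewrite /unif -/N; field; rewrite NN DN.
- exact: (@unif_state R S V).
split; first by move=> ax; rewrite divr_ge0 // ltW.
split.
  move=> x; rewrite -mulr_suml big_split /= sumr_const (Nm x x0) -/lam.
  have -> : #|(xpredT : pred (outT S))| = #|{: outT S}| by apply: eq_card.
  by rewrite -(mulr_natr K) -/N mulfV.
move=> i x x' a H.
by rewrite -!mulr_suml !big_split /= (NS i x x' a H).
Qed.

Lemma cone_effect (R : realType) S (w F : vec R S) (lam : R) : valid_system S ->
  (forall ax, 0 <= w ax) -> (forall i, NSi w i) ->
  (forall x, \sum_(a : outT S) w (a, x) = lam) -> is_effect F ->
  0 <= pair w F <= lam.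
Proof.
move=> V w0 NS Nm EF.
have [x0 _] := in_inhab V.
have lam0 : 0 <= lam by rewrite -(Nm x0); apply: sumr_ge0.
case: (eqVneq lam 0) => [l0|ln0].
  have wz ax : w ax = 0.
    case: ax => a x; apply: (psumr_eq0P (P := xpredT) (F := fun a => w (a, x))) => //.
    by rewrite Nm l0.
  by rewrite /pair big1 ?l0 ?lexx // => ax _; rewrite wz mul0r.
have lp : 0 < lam by rewrite lt_def ln0.
have st : is_state (fun ax => w ax / lam).
  split; first by move=> ax; rewrite divr_ge0.
  split; first by move=> x; rewrite -mulr_suml Nm mulfV.
  by move=> i x x' a H; rewrite -!mulr_suml (NS i x x' a H).
have /andP[e0 e1] := EF _ st.
have -> : pair w F = lam * pair (fun ax => w ax / lam) F.
  rewrite /pair mulr_sumr; apply: eq_bigr => ax _; field.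
  by [].
apply/andP; split; first exact: mulr_ge0.
by rewrite -[X in _ <= X]mulr1 ler_wpM2l.
Qed.


Lemma agree_inl X Y (a a' : outT (compose X Y)) (i : sBox X) :
  [forall j, (j != inl i) ==> (a' j == a j)] =
  [forall k, (k != i) ==> (resXo a' k == resXo a k)] && (resYo a' == resYo a).
Proof.
apply/forallP/andP => [H|[/forallP H1 /eqP H2]].
  split.
    apply/forallP => k; apply/implyP => ne; rewrite !ffunE.
    exact: (implyP (H (inl k))).
  apply/eqP/ffunP => k; rewrite !ffunE; apply/eqP; exact: (implyP (H (inr k))).
move=> [k|k]; apply/implyP => ne.
  by have := implyP (H1 k) ne; rewrite !ffunE.
by move/ffunP: H2 => /(_ k); rewrite !ffunE => ->.
Qed.

Lemma agree_inr X Y (a a' : outT (compose X Y)) (i : sBox Y) :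
  [forall j, (j != inr i) ==> (a' j == a j)] =
  (resXo a' == resXo a) && [forall k, (k != i) ==> (resYo a' k == resYo a k)].
Proof.
apply/forallP/andP => [H|[/eqP H2 /forallP H1]].
  split.
    apply/eqP/ffunP => k; rewrite !ffunE; apply/eqP; exact: (implyP (H (inl k))).
  apply/forallP => k; apply/implyP => ne; rewrite !ffunE.
  exact: (implyP (H (inr k))).
move=> [k|k]; apply/implyP => ne.
  by move/ffunP: H2 => /(_ k); rewrite !ffunE => ->.
by have := implyP (H1 k) ne; rewrite !ffunE.
Qed.

Definition isl X Y : pred (sBox (compose X Y)) := fun j => if j is inl _ then true else false.
Definition isr X Y : pred (sBox (compose X Y)) := fun j => if j is inr _ then true else false.

Lemma agreeD_inl X Y (a a' : outT (compose X Y)) :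
  [forall j, ~~ (@isl X Y j) ==> (a' j == a j)] = (resYo a' == resYo a).
Proof.
apply/forallP/eqP => [H|H].
  apply/ffunP => k; rewrite !ffunE; apply/eqP; exact: (implyP (H (inr k))).
move=> [k|k] //=; by move/ffunP: H => /(_ k); rewrite !ffunE => ->.
Qed.

Lemma agreeD_inr X Y (a a' : outT (compose X Y)) :
  [forall j, ~~ (@isr X Y j) ==> (a' j == a j)] = (resXo a' == resXo a).
Proof.
apply/forallP/eqP => [H|H].
  apply/ffunP => k; rewrite !ffunE; apply/eqP; exact: (implyP (H (inl k))).
move=> [k|k] //=; by move/ffunP: H => /(_ k); rewrite !ffunE => ->.
Qed.

Lemma sum_condX (R : realType) X Y (Q : pred (outT X)) (b : outT Y)
   (G : outT (compose X Y) -> R) :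
  \sum_(a' : outT (compose X Y) | Q (resXo a') && (resYo a' == b)) G a' =
  \sum_(aX : outT X | Q aX) G (joino aX b).
Proof.
rewrite big_mkcond sum_outZ [RHS]big_mkcond; apply: eq_bigr => aX _.
under eq_bigr => aY _ do rewrite resXo_join resYo_join.
case: (Q aX) => /=; last by rewrite big1.
by rewrite -big_mkcond /= big_pred1_eq.
Qed.

Lemma sum_condY (R : realType) X Y (aX : outT X) (Q : pred (outT Y))
   (G : outT (compose X Y) -> R) :
  \sum_(a' : outT (compose X Y) | (resXo a' == aX) && Q (resYo a')) G a' =
  \sum_(aY : outT Y | Q aY) G (joino aX aY).
Proof.
rewrite big_mkcond sum_outZ (bigD1 aX) //= [X in _ + X]big1 ?addr0.
  rewrite [RHS]big_mkcond; apply: eq_bigr => aY _.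
  by rewrite resXo_join resYo_join eqxx.
by move=> aX' ne; apply: big1 => aY _; rewrite resXo_join (negbTE ne).
Qed.

Definition Jn X Y (pX : idx X) (pY : idx Y) : idx (compose X Y) :=
  (joino pX.1 pY.1, joini pX.2 pY.2).

Lemma sum_idxZ (R : realType) X Y (F : idx (compose X Y) -> R) :
  \sum_(ax : idx (compose X Y)) F ax = \sum_(pX : idx X) \sum_(pY : idx Y) F (Jn pX pY).
Proof.
rewrite pair_bigA /=.
rewrite (reindex (fun p : idx X * idx Y => Jn p.1 p.2)) //=.
exists (fun ax : idx (compose X Y) => ((resXo ax.1, resXi ax.2), (resYo ax.1, resYi ax.2)))
  => [[[u1 u2] [v1 v2]] _|[a x] _] /=.
  by rewrite resXo_join resYo_join resXi_join resYi_join.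
by rewrite /Jn /= joinoK joiniK.
Qed.

Lemma pair_tensor (R : realType) X Y (u : vec R X) (v : vec R Y) (G : vec R (compose X Y)) :
  pair (tensor u v) G = \sum_(pX : idx X) \sum_(pY : idx Y) u pX * v pY * G (Jn pX pY).
Proof.
rewrite /pair sum_idxZ; apply: eq_bigr => -[a x] _; apply: eq_bigr => -[b y] _.
by rewrite /tensor /Jn /= resXo_join resYo_join resXi_join resYi_join.
Qed.

Lemma pair_tensor2 (R : realType) X Y (u E : vec R X) (v F : vec R Y) :
  pair (tensor u v) (tensor E F) = pair u E * pair v F.
Proof.
rewrite pair_tensor /pair mulr_suml; apply: eq_bigr => pX _.
rewrite mulr_sumr; apply: eq_bigr => pY _.
rewrite /tensor /Jn /= resXo_join resYo_join resXi_join resYi_join.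
by case: pX => ? ?; case: pY => ? ? /=; ring.
Qed.


Lemma sum_NSinl (R : realType) X Y (a : outT (compose X Y)) i (G : outT (compose X Y) -> R) :
  \sum_(a' : outT (compose X Y) | [forall j, (j != inl i) ==> (a' j == a j)]) G a' =
  \sum_(aX : outT X | [forall k, (k != i) ==> (aX k == resXo a k)]) G (joino aX (resYo a)).
Proof.
rewrite (eq_bigl _ _ (fun a' => agree_inl a a' i)).
exact: (sum_condX (fun aX : outT X => [forall k, (k != i) ==> (aX k == resXo a k)])).
Qed.

Lemma sum_NSinr (R : realType) X Y (a : outT (compose X Y)) i (G : outT (compose X Y) -> R) :
  \sum_(a' : outT (compose X Y) | [forall j, (j != inr i) ==> (a' j == a j)]) G a' =
  \sum_(aY : outT Y | [forall k, (k != i) ==> (aY k == resYo a k)]) G (joino (resXo a) aY).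
Proof.
rewrite (eq_bigl _ _ (fun a' => agree_inr a a' i)).
exact: (sum_condY _ (fun aY : outT Y => [forall k, (k != i) ==> (aY k == resYo a k)])).
Qed.

Lemma sum_Dinl (R : realType) X Y (a : outT (compose X Y)) (G : outT (compose X Y) -> R) :
  \sum_(a' : outT (compose X Y) | [forall j, ~~ (@isl X Y j) ==> (a' j == a j)]) G a' =
  \sum_(aX : outT X) G (joino aX (resYo a)).
Proof.
rewrite (eq_bigl (fun a' => predT (resXo a') && (resYo a' == resYo a))).
  exact: (sum_condX predT).
by move=> a'; rewrite agreeD_inl.
Qed.

Lemma sum_Dinr (R : realType) X Y (a : outT (compose X Y)) (G : outT (compose X Y) -> R) :
  \sum_(a' : outT (compose X Y) | [forall j, ~~ (@isr X Y j) ==> (a' j == a j)]) G a' =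
  \sum_(aY : outT Y) G (joino (resXo a) aY).
Proof.
rewrite (eq_bigl (fun a' => (resXo a' == resXo a) && predT (resYo a'))).
  exact: (sum_condY _ predT).
by move=> a'; rewrite agreeD_inr andbT.
Qed.

Lemma in_agree_inl X Y (x x' : inT (compose X Y)) i :
  (forall j, j != inl i -> x j = x' j) ->
  (forall k, k != i -> resXi x k = resXi x' k) /\ resYi x = resYi x'.
Proof.
move=> H; split; first by move=> k ne; rewrite !ffunE; apply: (H (inl k)).
by apply/ffunP => k; rewrite !ffunE; apply: (H (inr k)).
Qed.

Lemma in_agree_inr X Y (x x' : inT (compose X Y)) i :
  (forall j, j != inr i -> x j = x' j) ->
  resXi x = resXi x' /\ (forall k, k != i -> resYi x k = resYi x' k).
Proof.
move=> H; split; last by move=> k ne; rewrite !ffunE; apply: (H (inr k)).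
by apply/ffunP => k; rewrite !ffunE; apply: (H (inl k)).
Qed.

Lemma joini_agree_l X Y (xX xX' : inT X) (y : inT Y) i :
  (forall k, k != i -> xX k = xX' k) ->
  forall j, j != inl i -> joini xX y j = joini xX' y j.
Proof. by move=> H [k|k] ne; rewrite !ffunE //; apply: H. Qed.

Lemma joini_agree_r X Y (x : inT X) (y y' : inT Y) i :
  (forall k, k != i -> y k = y' k) ->
  forall j, j != inr i -> joini x y j = joini x y' j.
Proof. by move=> H [k|k] ne; rewrite !ffunE //; apply: H. Qed.

Lemma tensor_state (R : realType) X Y (u : vec R X) (v : vec R Y) :
  is_state u -> is_state v -> is_state (tensor u v).
Proof.
move=> [u0 [u1 uNS]] [v0 [v1 vNS]].
split; first by move=> ax; rewrite /tensor mulr_ge0.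
split.
  move=> x; rewrite /tensor sum_outZ /=.
  under eq_bigr => aX _ do under eq_bigr => aY _ do rewrite resXo_join resYo_join.
  under eq_bigr => aX _ do rewrite -mulr_sumr.
  by rewrite -mulr_suml u1 v1 mulr1.
move=> [i|i] x x' a H.
  have [H1 H2] := in_agree_inl H.
  rewrite /tensor !sum_NSinl /=.
  under eq_bigr => aX _ do rewrite resXo_join resYo_join.
  under [RHS]eq_bigr => aX _ do rewrite resXo_join resYo_join.
  by rewrite -!mulr_suml (uNS i _ _ _ H1) H2.
have [H1 H2] := in_agree_inr H.
rewrite /tensor !sum_NSinr /=.
under eq_bigr => aY _ do rewrite resXo_join resYo_join.
under [RHS]eq_bigr => aY _ do rewrite resXo_join resYo_join.
by rewrite -!mulr_sumr (vNS i _ _ _ H2) H1.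
Qed.


Definition sliceX (R : realType) X Y (p : vec R (compose X Y)) (pY : idx Y) : vec R X :=
  fun pX => p (Jn pX pY).
Definition sliceY (R : realType) X Y (p : vec R (compose X Y)) (pX : idx X) : vec R Y :=
  fun pY => p (Jn pX pY).

Lemma NSlin_sliceX (R : realType) X Y (p : vec R (compose X Y)) pY :
  valid_system X -> (forall j, NSi p j) -> NSlin (sliceX p pY).
Proof.
move=> VX NS; split.
  move=> i x x' a H; rewrite /sliceX /Jn /=.
  have key z : \sum_(a' : outT X | [forall j, (j != i) ==> (a' j == a j)]) p (joino a' pY.1, joini z pY.2)
     = \sum_(a' : outT (compose X Y) | [forall j, (j != inl i) ==> (a' j == joino a pY.1 j)]) p (a', joini z pY.2).
    by rewrite sum_NSinl resXo_join resYo_join.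
  rewrite !key; apply: NS; exact: joini_agree_l.
have [a0 _] := out_inhab VX.
move=> x x'; rewrite /sliceX /Jn /=.
have key z : \sum_(a' : outT X) p (joino a' pY.1, joini z pY.2)
   = \sum_(a' : outT (compose X Y) | [forall j, ~~ (@isl X Y j) ==> (a' j == joino a0 pY.1 j)]) p (a', joini z pY.2).
  by rewrite sum_Dinl resYo_join.
rewrite !key; apply: marg; first by move=> i _; apply: NS.
by move=> [k|k] //= _; rewrite !ffunE.
Qed.

Lemma NSlin_sliceY (R : realType) X Y (p : vec R (compose X Y)) pX :
  valid_system Y -> (forall j, NSi p j) -> NSlin (sliceY p pX).
Proof.
move=> VY NS; split.
  move=> i y y' b H; rewrite /sliceY /Jn /=.
  have key z : \sum_(b' : outT Y | [forall j, (j != i) ==> (b' j == b j)]) p (joino pX.1 b', joini pX.2 z)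
     = \sum_(a' : outT (compose X Y) | [forall j, (j != inr i) ==> (a' j == joino pX.1 b j)]) p (a', joini pX.2 z).
    by rewrite sum_NSinr resXo_join resYo_join.
  rewrite !key; apply: NS; exact: joini_agree_r.
have [b0 _] := out_inhab VY.
move=> y y'; rewrite /sliceY /Jn /=.
have key z : \sum_(b' : outT Y) p (joino pX.1 b', joini pX.2 z)
   = \sum_(a' : outT (compose X Y) | [forall j, ~~ (@isr X Y j) ==> (a' j == joino pX.1 b0 j)]) p (a', joini pX.2 z).
  by rewrite sum_Dinr resXo_join.
rewrite !key; apply: marg; first by move=> i _; apply: NS.
by move=> [k|k] //= _; rewrite !ffunE.
Qed.


Definition tov (R : realType) (S : system) (v : vec R S) : 'rV[R]_#|{: idx S}| :=
  \row_i v (enum_val i).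

Definition rowv (R : realType) (S : system) m (M : 'M[R]_(m, #|{: idx S}|)) (k : 'I_m) : vec R S :=
  fun ax => M k (enum_rank ax).

Lemma span_step (R : realType) (S : system) m (M : 'M[R]_(m, #|{: idx S}|)) :
  (forall k, is_state (rowv M k)) ->
  ~ (forall s : vec R S, is_state s -> (tov s <= M)%MS) ->
  exists M' : 'M[R]_(m + 1, #|{: idx S}|), (forall k, is_state (rowv M' k)) /\
     (\rank M < \rank M')%N.
Proof.
move=> rows nall.
have [s hs] := not_all_ex_not _ _ nall.
have [st nsub] := imply_to_and _ _ hs.
pose M' := col_mx M (tov s).
have sM : (M <= M')%MS by apply/row_subP => k; rewrite -(rowKu k M (tov s)) row_sub.
have sS : (tov s <= M')%MS by apply/row_subP => k; rewrite -(rowKd k M (tov s)) row_sub.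
exists M'; split; last first.
  rewrite (ltn_leqif (mxrank_leqif_sup sM)); apply/negP => /(submx_trans sS) h.
  exact: nsub.
move=> k; rewrite /rowv -(splitK k); case: (split k) => [k1|k2] /=.
  have -> : (fun ax => M' (lshift 1 k1) (enum_rank ax)) = rowv M k1.
    by apply: functional_extensionality => ax; rewrite col_mxEu.
  exact: rows.
have -> : (fun ax => M' (rshift m k2) (enum_rank ax)) = s.
  by apply: functional_extensionality => ax; rewrite col_mxEd mxE enum_rankK.
exact: st.
Qed.

Lemma state_span_mx (R : realType) (S : system) :
  exists m (M : 'M[R]_(m, #|{: idx S}|)), (forall k, is_state (rowv M k)) /\
    (forall s : vec R S, is_state s -> (tov s <= M)%MS).
Proof.
set n := #|{: idx S}|.
suff H : forall d m (M : 'M[R]_(m, n)), (forall k, is_state (rowv M k)) ->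
   (n - \rank M <= d)%N -> exists m (M : 'M[R]_(m, n)), (forall k, is_state (rowv M k)) /\
    (forall s : vec R S, is_state s -> (tov s <= M)%MS).
  apply: (H n 0 0); last by rewrite leq_subr.
  by case.
elim=> [|d IH] m M rows hd;
  (case: (classic (forall s : vec R S, is_state s -> (tov s <= M)%MS)) => [all|nall];
    first by exists m, M);
  have [M' [rows' lt]] := span_step rows nall;
  have le := rank_leq_col M'.
  by exfalso; move: hd le lt; rewrite /n; lia.
by apply: (IH _ M') => //; move: hd le lt; rewrite /n; lia.
Qed.


Lemma nslin_sub (R : realType) (S : system) m (M : 'M[R]_(m, #|{: idx S}|)) (v : vec R S) :
  valid_system S -> (forall s : vec R S, is_state s -> (tov s <= M)%MS) -> NSlin v ->
  (tov v <= M)%MS.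
Proof.
move=> V all nv; have [c1 [c2 [s1 [s2 [st1 st2 E]]]]] := span_states V nv.
have -> : tov v = c1 *: tov s1 + c2 *: tov s2 by apply/rowP => i; rewrite !mxE E.
by apply: addmx_sub; apply: scalemx_sub; apply: all.
Qed.

Lemma decomp (R : realType) (S : system) m (M : 'M[R]_(m, #|{: idx S}|)) (v : vec R S) :
  (tov v <= M)%MS -> forall ax,
  v ax = \sum_(i < #|{: idx S}|) \sum_(k < m) v (enum_val i) * pinvmx M i k * rowv M k ax.
Proof.
move=> sub ax.
have E := mulmxKpV sub.
have -> : v ax = tov v 0 (enum_rank ax) by rewrite mxE enum_rankK.
rewrite -E !mxE exchange_big; apply: eq_bigr => k _ /=.
rewrite mxE big_distrl; apply: eq_bigr => i _ /=.
by rewrite mxE /rowv.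
Qed.

Lemma swap4 (R : realType) (I J K L : finType) (F : I -> J -> K -> L -> R) :
  \sum_i \sum_j \sum_k \sum_l F i j k l = \sum_k \sum_l \sum_i \sum_j F i j k l.
Proof.
rewrite (eq_bigr (fun i => \sum_k \sum_j \sum_l F i j k l)); last by move=> i _; rewrite exchange_big.
rewrite exchange_big; apply: eq_bigr => k _.
rewrite (eq_bigr (fun i => \sum_l \sum_j F i j k l)); last by move=> i _; rewrite exchange_big.
by rewrite exchange_big.
Qed.

Lemma pair_tensor_lin (R : realType) X Y (u s1 s2 : vec R X) (v : vec R Y) c1 c2
   (G : vec R (compose X Y)) :
  (forall ax, u ax = c1 * s1 ax + c2 * s2 ax) ->
  pair (tensor u v) G = c1 * pair (tensor s1 v) G + c2 * pair (tensor s2 v) G.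
Proof.
move=> E; rewrite !pair_tensor !mulr_sumr -big_split; apply: eq_bigr => pX _.
rewrite !mulr_sumr -big_split; apply: eq_bigr => pY _.
by rewrite /= E; ring.
Qed.

Lemma mainA (R : realType) X Y (G : vec R (compose X Y)) :
  valid_system X -> valid_system Y ->
  (forall u v, is_state u -> is_state v -> pair (tensor u v) G = 0) ->
  forall p, is_state p -> pair p G = 0.
Proof.
move=> VX VY H p [p0 [p1 pNS]].
have [m [M [rows all]]] := state_span_mx R Y.
have dec pX pY : p (Jn pX pY) = \sum_(i < #|{: idx Y}|) \sum_(k < m)
     sliceX p (enum_val i) pX * pinvmx M i k * rowv M k pY.
  have := decomp (nslin_sub VY all (NSlin_sliceY pX VY pNS)) pY.
  by rewrite /sliceY /sliceX.
rewrite /pair sum_idxZ.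
transitivity (\sum_(pX : idx X) \sum_(pY : idx Y) \sum_(i < #|{: idx Y}|) \sum_(k < m)
   pinvmx M i k * (sliceX p (enum_val i) pX * rowv M k pY * G (Jn pX pY))).
  apply: eq_bigr => pX _; apply: eq_bigr => pY _.
  rewrite dec big_distrl; apply: eq_bigr => i _ /=.
  rewrite big_distrl; apply: eq_bigr => k _ /=; ring.
rewrite swap4; apply: big1 => i _; apply: big1 => k _.
under eq_bigr => pX _ do rewrite -mulr_sumr.
rewrite -mulr_sumr.
have -> : \sum_(pX : idx X) \sum_(pY : idx Y) sliceX p (enum_val i) pX * rowv M k pY * G (Jn pX pY)
   = pair (tensor (sliceX p (enum_val i)) (rowv M k)) G by rewrite pair_tensor.
have [c1 [c2 [s1 [s2 [st1 st2 E]]]]] := span_states VX (NSlin_sliceX (enum_val i) VX pNS).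
by rewrite (pair_tensor_lin _ _ E) !H // !mulr0 addr0 mulr0.
Qed.


Lemma pair_scale (R : realType) S (p E : vec R S) c :
  pair p (fun ax => c * E ax) = c * pair p E.
Proof. by rewrite /pair mulr_sumr; apply: eq_bigr => ax _; ring. Qed.

Lemma pair_sub (R : realType) S (p E F : vec R S) :
  pair p (fun ax => E ax - F ax) = pair p E - pair p F.
Proof. by rewrite /pair -sumrB; apply: eq_bigr => ax _; ring. Qed.

Lemma pair_sum (R : realType) S (T : finType) (p : vec R S) (E : T -> vec R S) :
  pair p (fun ax => \sum_(t : T) E t ax) = \sum_(t : T) pair p (E t).
Proof.
rewrite /pair exchange_big; apply: eq_bigr => ax _; by rewrite mulr_sumr.
Qed.

Lemma mainA' (R : realType) X Y (G1 G2 : vec R (compose X Y)) :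
  valid_system X -> valid_system Y ->
  (forall u v, is_state u -> is_state v -> pair (tensor u v) G1 = pair (tensor u v) G2) ->
  forall p, is_state p -> pair p G1 = pair p G2.
Proof.
move=> VX VY H p sp; apply/eqP; rewrite -subr_eq0 -pair_sub; apply/eqP.
apply: (mainA VX VY) => // u v su sv.
by rewrite pair_sub H // subrr.
Qed.

Definition one (R : realType) S (x0 : inT S) : vec R S := fun ax => (ax.2 == x0)%:R.

Lemma pair_one (R : realType) S (x0 : inT S) (p : vec R S) :
  is_state p -> pair p (one R x0) = 1.
Proof.
move=> [_ [p1 _]]; rewrite -(p1 x0) /pair /one.
have -> : \sum_(ax : idx S) p ax * (ax.2 == x0)%:R =
    \sum_(a : outT S) \sum_(x : inT S) p (a, x) * (x == x0)%:R.
  by rewrite pair_bigA; apply: eq_bigr => -[].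
apply: eq_bigr => a _; rewrite (bigD1 x0) //= eqxx mulr1 big1 ?addr0 //.
by move=> x /negbTE ->; rewrite mulr0.
Qed.

Lemma effect_tensor (R : realType) X Y (E : vec R X) (F : vec R Y) :
  valid_system X -> valid_system Y -> is_effect E -> is_effect F -> is_effect (tensor E F).
Proof.
move=> VX VY eE eF p sp; have [p0 [p1 pNS]] := sp.
have [x0 _] := in_inhab VX; have [y0 _] := in_inhab VY.
pose w : vec R Y := fun pY => pair (sliceX p pY) E.
have -> : pair p (tensor E F) = pair w F.
  rewrite /pair sum_idxZ exchange_big; apply: eq_bigr => pY _.
  rewrite /w /pair mulr_suml; apply: eq_bigr => pX _.
  rewrite /tensor /Jn /sliceX /= resXo_join resYo_join resXi_join resYi_join.
  by case: pX => ? ?; case: pY => ? ?; rewrite /Jn /=; ring.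
have wle pY : 0 <= w pY <= \sum_(aX : outT X) sliceX p pY (aX, x0).
  have [NSX NmX] := NSlin_sliceX pY VX pNS.
  exact: (@cone_effect R X (sliceX p pY) E (\sum_(aX : outT X) sliceX p pY (aX, x0))
     VX (fun ax => p0 _) NSX (fun x => NmX x x0) eE).
have wNS : forall i, NSi w i.
  move=> i y y' b H; rewrite /w /pair.
  rewrite (exchange_big _ _ _ _ _ (fun b' pX => sliceX p (b', y) pX * E pX)).
  rewrite [RHS](exchange_big _ _ _ _ _ (fun b' pX => sliceX p (b', y') pX * E pX)).
  apply: eq_bigr => pX _; rewrite -!mulr_suml.
  have [NSY _] := NSlin_sliceY pX VY pNS.
  by have := NSY i y y' b H; rewrite /sliceY /sliceX => ->.
set lam := \sum_(b : outT Y) w (b, y0).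
have wNm : forall y, \sum_(b : outT Y) w (b, y) = lam.
  move=> y; rewrite /lam /w /pair.
  rewrite exchange_big [RHS]exchange_big; apply: eq_bigr => pX _; rewrite -!mulr_suml.
  have [_ NmY] := NSlin_sliceY pX VY pNS.
  by have := NmY y y0; rewrite /sliceY /sliceX => ->.
have lam1 : lam <= 1.
  apply: (@le_trans _ _ (\sum_(b : outT Y) \sum_(aX : outT X) sliceX p (b, y0) (aX, x0))).
    by apply: ler_sum => b _; have /andP[_ ->] := wle (b, y0).
  rewrite -(p1 (joini x0 y0)) sum_outZ exchange_big /sliceX /Jn /=.
  by apply: ler_sum => b _; apply: ler_sum => aX _.
have [NSw Nw] : (forall i, NSi w i) /\ True by [].
have /andP[h0 h1] := cone_effect VY (fun ax => proj1 (andP (wle ax))) wNS wNm eF.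
by rewrite h0 /= (le_trans h1 lam1).
Qed.


Lemma prod_meas_meas (R : realType) X Y (Tr Ts : finType)
    (MX : Tr -> vec R X) (MY : Ts -> vec R Y) :
  valid_system X -> valid_system Y -> is_measurement MX -> is_measurement MY ->
  is_measurement (prod_meas MX MY).
Proof.
move=> VX VY [eX sX] [eY sY]; split.
  by move=> [r t]; apply: effect_tensor.
have [x0 _] := in_inhab VX; have [y0 _] := in_inhab VY.
move=> p sp; rewrite -pair_sum -(pair_one (joini x0 y0) sp).
apply: (mainA' VX VY) => // u v su sv.
rewrite pair_sum pair_one; last exact: tensor_state.
rewrite -(pair_bigA _ (fun r t => pair (tensor u v) (prod_meas MX MY (r, t)))) /=.
under eq_bigr => r _ do under eq_bigr => t _ do rewrite /prod_meas /= pair_tensor2.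
under eq_bigr => r _ do rewrite -mulr_sumr (sY v sv) mulr1.
exact: sX.
Qed.

Lemma split_sum (R : realType) (Tr Ts Tn : finType) (f : Tn -> Tr * Ts) (g : Tn -> R) r :
  \sum_(s | (f s).1 == r) g s = \sum_(t : Ts) \sum_(s | f s == (r, t)) g s.
Proof.
by rewrite (partition_big (fun s => (f s).2) predT) //=.
Qed.

Lemma split_sum2 (R : realType) (Tr Ts Tn : finType) (f : Tn -> Tr * Ts) (g : Tn -> R) t :
  \sum_(s | (f s).2 == t) g s = \sum_(r : Tr) \sum_(s | f s == (r, t)) g s.
Proof.
rewrite (partition_big (fun s => (f s).1) predT) //=.
apply: eq_bigr => r _; apply: eq_bigl => s.
by case: (f s) => a b /=; rewrite xpair_eqE andbC.
Qed.

Theorem corollary4 (R : realType) (X Y : system) (Tr Ts : finType)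
    (MX : Tr -> vec R X) (MY : Ts -> vec R Y) :
  valid_system X -> valid_system Y ->
  maximally_informative MX -> maximally_informative MY ->
  maximally_informative (prod_meas MX MY).
Proof.
move=> VX VY [mX maxX] [mY maxY].
have mZ := prod_meas_meas VX VY mX mY.
split => // Tn N f [eN sN] ref s.
set r := (f s).1; set t := (f s).2.
have hX : forall q, is_state q -> exists c, forall u, is_state u ->
    pair (tensor u q) (N s) = c * pair u (MX r).
  move=> q sq.
  pose EX s' : vec R X := fun pX => \sum_(pY : idx Y) q pY * N s' (Jn pX pY).
  have pE u s' : pair u (EX s') = pair (tensor u q) (N s').
    rewrite pair_tensor /pair; apply: eq_bigr => pX _; rewrite /EX mulr_sumr.
    by apply: eq_bigr => pY _; ring.
  have meas : is_measurement EX.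
    split; first by move=> s' u su; rewrite pE; apply: eN; exact: tensor_state.
    by move=> u su; under eq_bigr => s' _ do rewrite pE; apply: sN; exact: tensor_state.
  have refX : refines MX EX (fun s' => (f s').1).
    move=> r' u su; under eq_bigr => s' _ do rewrite pE.
    rewrite split_sum.
    under eq_bigr => t' _ do rewrite -(ref (r', t') _ (tensor_state su sq)) /prod_meas /= pair_tensor2.
    by rewrite -mulr_sumr (proj2 mY q sq) mulr1.
  have [c Hc] := maxX _ EX _ meas refX s.
  by exists c => u su; rewrite -pE Hc.
have hY : forall u, is_state u -> exists c, forall q, is_state q ->
    pair (tensor u q) (N s) = c * pair q (MY t).
  move=> u su.
  pose EY s' : vec R Y := fun pY => \sum_(pX : idx X) u pX * N s' (Jn pX pY).
  have pE q s' : pair q (EY s') = pair (tensor u q) (N s').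
    rewrite pair_tensor /pair exchange_big; apply: eq_bigr => pY _; rewrite /EY mulr_sumr.
    by apply: eq_bigr => pX _; ring.
  have meas : is_measurement EY.
    split; first by move=> s' q sq; rewrite pE; apply: eN; exact: tensor_state.
    by move=> q sq; under eq_bigr => s' _ do rewrite pE; apply: sN; exact: tensor_state.
  have refY : refines MY EY (fun s' => (f s').2).
    move=> t' q sq; under eq_bigr => s' _ do rewrite pE.
    rewrite split_sum2.
    under eq_bigr => r' _ do rewrite -(ref (r', t') _ (tensor_state su sq)) /prod_meas /= pair_tensor2.
    by rewrite -mulr_suml (proj2 mX u su) mul1r.
  have [c Hc] := maxY _ EY _ meas refY s.
  by exists c => q sq; rewrite -pE Hc.
have [k Hk] : exists k, forall u v, is_state u -> is_state v ->
    pair (tensor u v) (N s) = k * (pair u (MX r) * pair v (MY t)).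
  case: (classic (exists p0, is_state p0 /\ pair p0 (MX r) <> 0)) => [[p0 [sp0 nz]]|none].
    have [d Hd] := hY p0 sp0.
    exists (d / pair p0 (MX r)) => u v su sv.
    have [c Hc] := hX v sv.
    have e1 := Hc p0 sp0; rewrite Hd // in e1.
    rewrite Hc //.
    have -> : c = d * pair v (MY t) / pair p0 (MX r).
      by rewrite e1 mulfK //; apply/eqP.
    by field; apply/eqP.
  exists 0 => u v su sv; have [c Hc] := hX v sv.
  rewrite Hc //; have -> : pair u (MX r) = 0.
    by apply: NNPP => nz; apply: none; exists u.
  by rewrite !mul0r mulr0.
exists k => p sp.
rewrite -pair_scale; apply: (mainA' VX VY) => // u v su sv.
by rewrite pair_scale Hk // /prod_meas pair_tensor2.
Qed.
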